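(* Let $M,B,\sigma>0$ and $\mu>0$, and let $X$ be the cumulative distribution function of the normal distribution with mean $\mu$ and variance $\sigma^2$. The map $p\mapsto \frac{MB(1-X(p))}{p}$ is a strictly decreasing bijection from $(0,\infty)$ onto $(0,\infty)$; let $y:(0,\infty)\to(0,\infty)$ denote its inverse, so that $D=MB(1-X(y(D)))/y(D)$. Then the function $F(D)=y(D)\,D$ is concave on $D>0$.
   Context: $F(D)=y(D)D$ is the advertising revenue of a content provider when user demand is $D$: $M$ advertisers with budget $B$ and normally distributed valuations $v$ per attention demand $MB(1-X(p^a))/p^a$ attentions at price $p^a$, and the provider sets the price $p^a=y(D)$ at which this equals $D$. *)

(* Defs.v *)
From HB Require Import structures.
From mathcomp Require Import all_boot all_order all_algebra.
From mathcomp Require Import all_classical all_reals all_analysis.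
Set Implicit Arguments. Unset Strict Implicit. Unset Printing Implicit Defensive.
Import Order.TTheory GRing.Theory Num.Theory.
Local Open Scope classical_set_scope.
Local Open Scope ring_scope.

(* CDF of the normal distribution with mean m and standard deviation s
   (variance s^2): X(p) = P(]-oo, p]) under the library's normal_prob. *)
Definition normal_cdf {R : realType} (m s p : R) : R :=
  fine (normal_prob m s `]-oo, p]).

(* Attention demanded by M advertisers of budget B at price p. *)
Definition attention_demand {R : realType} (M B m s p : R) : R :=
  M * B * (1 - normal_cdf m s p) / p.

Definition concave_on_pos {R : realType} (F : R -> R) : Prop :=
  forall D1 D2 t : R, 0 < D1 -> 0 < D2 -> 0 <= t -> t <= 1 ->
    t * F D1 + (1 - t) * F D2 <= F (t * D1 + (1 - t) * D2).

(* Main.v *)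
Require Import Defs.
From HB Require Import structures.
From mathcomp Require Import all_boot all_order all_algebra.
From mathcomp Require Import all_classical all_reals all_analysis.
From mathcomp Require Import ring lra.
Import Order.TTheory GRing.Theory Num.Theory.
Import numFieldNormedType.Exports.
Local Open Scope classical_set_scope.
Local Open Scope ring_scope.

Section S.
Context (R : realType) (m s : R) (s0 : 0 < s).
Notation phi := (normal_pdf m s).
Notation Xc := (normal_cdf m s).

Lemma X_der (x : R) : is_derive x (1:R) Xc (phi x).
Proof.
have := @continuous_FTC1 R phi -oo%O x (x+1) _ _ _ _.
case.
- by rewrite ltrDl.
- apply: integrableS (integrable_normal_pdf m s) => //.
- by rewrite ltNyr.
- by have := @continuous_normal_pdf R m s (lt0r_neq0 s0); apply.
move=> H1 H2.
apply: DeriveDef => //.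
by rewrite -H2 derive1E.
Qed.

Lemma phiE x : phi x = normal_peak s * expR (- (x - m) ^+ 2 / (s ^+ 2 *+ 2)).
Proof. by rewrite /normal_pdf (negbTE (lt0r_neq0 s0)). Qed.

Lemma phi_gt0 x : 0 < phi x.
Proof. by rewrite phiE mulr_gt0 ?expR_gt0 ?normal_peak_gt0 ?lt0r_neq0. Qed.

Lemma X_cont : continuous Xc.
Proof. move=> x; have := @ex_derive _ _ _ _ _ _ _ (X_der x). by move/derivable1_diffP/differentiable_continuous. Qed.

Lemma X_ge0 x : 0 <= Xc x.
Proof. by rewrite /normal_cdf fine_ge0 // measure_ge0. Qed.

Lemma X_le1 x : Xc x <= 1.
Proof.
rewrite /normal_cdf.
have h := @probability_le1 _ _ R (normal_prob m s) `]-oo, x] (measurable_itv _).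
rewrite -lee_fin fineK //.
by rewrite ge0_fin_numE ?measure_ge0 // (le_lt_trans h) ?ltry.
Qed.

Lemma X_incr {x y : R} : x < y -> Xc x < Xc y.
Proof.
move=> xy.
have [c _ h] := MVT xy (fun z _ => X_der z) (continuous_subspaceT (X_cont)).
by rewrite -subr_gt0 h mulr_gt0 ?phi_gt0 ?subr_gt0.
Qed.

Lemma X_lt1 x : Xc x < 1.
Proof. have h : x < x + 1 by rewrite ltrDl. exact: lt_le_trans (X_incr h) (X_le1 _). Qed.

Lemma X_sup {e : R} : 0 < e -> exists N : R, 1 - e < Xc N.
Proof.
move=> e0; apply/not_existsP => H.
pose F := fun n : nat => [set` `]-oo, (n%:R : R)]].
have mF : forall i, measurable (F i) by move=> i; exact: measurable_itv.
have UF : \bigcup_n F n = setT.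
  apply/seteqP; split => // x _.
  exists (Num.trunc x).+1 => //; rewrite /F /= in_itv /=.
  exact/ltW/truncnS_gt.
have ndF : nondecreasing_seq F.
  move=> i j ij; apply/subsetPset => x; rewrite /F /= !in_itv /= => /le_trans; apply.
  by rewrite ler_nat.
have := @nondecreasing_cvg_mu _ _ _ (normal_prob m s) F mF _ ndF.
have P1 : normal_prob m s [set: R] = 1%E by rewrite /normal_prob integral_normal_pdf.
rewrite UF => /(_ measurableT) /cvge_to_le h.
have : (normal_prob m s [set: R] <= (1 - e)%:E)%E.
  apply: h; apply: nearW => n /=.
  have := H n%:R; move/negP; rewrite -leNgt => h.
  rewrite -(@fineK _ (normal_prob m s (F n))) ?lee_fin //.
  rewrite ge0_fin_numE ?measure_ge0 //.
  have h2 := @probability_le1 _ _ R (normal_prob m s) (F n) (mF n).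
  exact: le_lt_trans h2 (ltry _).
by rewrite P1 lee_fin lerDl oppr_ge0 leNgt e0.
Qed.

Lemma Xsh_der k x : is_derive x (1:R) (fun N => Xc (N + k)) (phi (x + k)).
Proof.
have d1 : derivable (shift k : R -> R) x 1 := @ex_derive _ _ _ _ _ _ _ (is_derive_shift x 1 k).
have d2 : derivable Xc (x + k) 1 := @ex_derive _ _ _ _ _ _ _ (X_der (x + k)).
have hc := derive1_comp d1 d2.
apply: DeriveDef.
  apply/derivable1_diffP.
  apply: differentiable_comp; apply/derivable1_diffP => //.
rewrite -derive1E.
have -> : (fun N => Xc (N + k)) = Xc \o shift k by [].
rewrite hc !derive1E.
rewrite (@derive_val _ _ _ _ _ _ _ (is_derive_shift x 1 k)).
by rewrite (@derive_val _ _ _ _ _ _ _ (X_der (x + k))) mulr1.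
Qed.

Lemma phi_shift q p N : q < p -> 0 <= N -> phi q * phi (p + N) <= phi p * phi (q + N).
Proof.
move=> qp N0.
have c0 : 0 < s ^+ 2 *+ 2 by rewrite pmulrn_lgt0 // exprn_gt0.
rewrite !phiE mulrACA [X in _ <= X]mulrACA ler_pM2l ?mulr_gt0 ?normal_peak_gt0 ?lt0r_neq0 //.
rewrite -!expRD ler_expR -!mulrDl ler_pM2r ?invr_gt0 //.
nra.
Qed.

Lemma der_cont (f df : R -> R) (a b : R) : (forall x, is_derive x (1:R) f (df x)) ->
  {within `[a, b], continuous f}.
Proof. move=> h; apply: derivable_within_continuous => x _; exact: (@ex_derive _ _ _ _ _ _ _ (h x)). Qed.

Lemma mills {q p : R} : q < p -> phi q * (1 - Xc p) <= phi p * (1 - Xc q).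
Proof.
move=> qp.
have A_le N : 0 < N -> phi q * (Xc (N + p) - Xc p) <= phi p * (Xc (N + q) - Xc q).
  move=> N0.
  pose A t := phi q * Xc (t + p) - phi p * Xc (t + q).
  have Ad t : is_derive t (1:R) A (phi q * phi (t + p) - phi p * phi (t + q)).
    have := is_deriveB (is_deriveZ (phi q) (Xsh_der p t)) (is_deriveZ (phi p) (Xsh_der q t)).
    exact.
  have [c /andP[c0 cN] hc] := MVT N0 (fun x _ => Ad x) (@der_cont _ _ 0 N Ad).
  have : A N - A 0 <= 0.
    rewrite hc subr0; apply: mulr_le0_ge0; last exact: ltW.
    rewrite subr_le0 addrC [c + q]addrC; apply: phi_shift => //; exact: ltW.
  rewrite /A !add0r; lra.
rewrite leNgt; apply/negP => H.
set d := phi q * (1 - Xc p) - phi p * (1 - Xc q).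
have d0 : 0 < d by rewrite subr_gt0.
have pq0 := phi_gt0 q.
have [Z hZ] := X_sup (divr_gt0 d0 pq0).
pose N := `|Z - p| + 1.
have N0 : 0 < N by rewrite ltr_pwDr // normr_ge0.
have ZN : Z < N + p.
  rewrite /N -ltrBlDr; apply: (le_lt_trans (ler_norm _)); rewrite ltrDl //.
have h1 := A_le N N0.
have h2 := X_le1 (N + q).
have h3 := X_incr ZN.
have h4 : 1 - d / phi q < Xc (N + p) by exact: lt_trans h3.
have : phi q * (1 - d / phi q) < phi q * Xc (N + p) by rewrite ltr_pM2l.
rewrite mulrBr mulr1 mulrCA divff ?mulr1 ?lt0r_neq0 // /d.
have := phi_gt0 p.
nra.
Qed.

Section K.
Context (K : R) (K0 : 0 < K).

Lemma G_der (x : R) : is_derive x (1:R) (fun p => K * (1 - Xc p)) (- K * phi x).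
Proof.
have h := is_deriveZ K (is_deriveB (is_derive_cst (1:R) x 1) (X_der x)).
apply: is_derive_eq h _.
by rewrite sub0r scalerN mulNr.
Qed.

Lemma g_der (x : R) : 0 < x ->
  is_derive x (1:R) (fun p => K * (1 - Xc p) / p) (- K * (x * phi x + (1 - Xc x)) / x ^+ 2).
Proof.
move=> x0.
have hV := is_deriveV (f := id) (lt0r_neq0 x0) (is_derive_id x (1:R)).
have h := is_deriveM (G_der x) hV.
have -> : (fun p => K * (1 - Xc p) / p) = (fun p => K * (1 - Xc p)) * (fun y => (id y)^-1).
  by apply/funext.
apply: is_derive_eq h _.
change ((K * (1 - Xc x)) * (- x ^- 2 * 1) + x^-1 * (- K * phi x) = - K * (x * phi x + (1 - Xc x)) / x ^+ 2).
field. exact: lt0r_neq0.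
Qed.

Let GG (p : R) : R := K * (1 - Xc p).
Let gg (p : R) : R := K * (1 - Xc p) / p.
Let dG (x : R) : R := - K * phi x.
Let dg (x : R) : R := - K * (x * phi x + (1 - Xc x)) / x ^+ 2.

Lemma hE x : 0 < x -> dG x / dg x = x ^+ 2 * phi x / (x * phi x + (1 - Xc x)).
Proof.
move=> x0.
have S0 : 0 < 1 - Xc x by rewrite subr_gt0 X_lt1.
have hp := phi_gt0 x.
have D0 : x * phi x + (1 - Xc x) != 0 by apply: lt0r_neq0; rewrite addr_gt0 // mulr_gt0.
rewrite /dG /dg; field.
by rewrite D0 lt0r_neq0 // lt0r_neq0.
Qed.

Lemma h_mono {a b : R} : 0 < a -> a < b -> dG a / dg a <= dG b / dg b.
Proof.
move=> a0 ab; have b0 := lt_trans a0 ab.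
rewrite hE // hE //.
have Sa : 0 < 1 - Xc a by rewrite subr_gt0 X_lt1.
have Sb : 0 < 1 - Xc b by rewrite subr_gt0 X_lt1.
have pa := phi_gt0 a; have pb := phi_gt0 b.
have Da : 0 < a * phi a + (1 - Xc a) by rewrite addr_gt0 // mulr_gt0.
have Db : 0 < b * phi b + (1 - Xc b) by rewrite addr_gt0 // mulr_gt0.
rewrite ler_pdivrMr // [X in _ <= X]mulrAC ler_pdivlMr //.
have hm := mills ab.
have e1 : a ^+ 2 * b * (phi a * phi b) <= b ^+ 2 * a * (phi a * phi b).
  apply: ler_wpM2r; first by apply: mulr_ge0; apply: ltW.
  have := mulr_gt0 a0 b0; nra.
have e2 : a ^+ 2 * (phi a * (1 - Xc b)) <= b ^+ 2 * (phi b * (1 - Xc a)).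
  apply: (le_trans (ler_wpM2l _ hm)); first by apply: ltW; apply: exprn_gt0.
  apply: ler_wpM2r; first by apply: mulr_ge0; apply: ltW.
  nra.
nra.
Qed.

Lemma gg_cont a b : 0 < a -> {within `[a, b], continuous gg}.
Proof.
move=> a0; apply: derivable_within_continuous => x.
rewrite in_itv /= => /andP[ax _].
have := @ex_derive _ _ _ _ _ _ _ (g_der x (lt_le_trans a0 ax)). by [].
Qed.

Lemma cmvt {a b : R} : 0 < a -> a < b -> exists2 c, a < c < b &
  dG c / dg c = (GG b - GG a) / (gg b - gg a).
Proof.
move=> a0 ab.
have dg0 x : x \in `]a, b[ -> dg x != 0.
  rewrite in_itv /= => /andP[ax _]; have x0 := lt_trans a0 ax.
  have S0 : 0 < 1 - Xc x by rewrite subr_gt0 X_lt1.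
  have hp := phi_gt0 x.
  rewrite /dg; apply: mulf_neq0; last by rewrite invr_neq0 // expf_neq0 // lt0r_neq0.
  apply: mulf_neq0; first by rewrite oppr_eq0 lt0r_neq0.
  by apply: lt0r_neq0; rewrite addr_gt0 // mulr_gt0.
have gd x : x \in `]a, b[ -> is_derive x (1:R) gg (dg x).
  by rewrite in_itv /= => /andP[ax _]; exact: g_der x (lt_trans a0 ax).
have [c cab hc] := cauchy_MVT ab (@der_cont _ _ a b G_der) (@gg_cont a b a0)
  (fun x _ => G_der x) gd dg0.
by exists c => //; move: cab; rewrite in_itv.
Qed.

Lemma slope_mono a b c : 0 < a -> a < b -> b < c ->
  (GG b - GG a) / (gg b - gg a) <= (GG c - GG b) / (gg c - gg b).
Proof.
move=> a0 ab bc.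
have [x /andP[ax xb] <-] := cmvt a0 ab.
have [y /andP[bY yc] <-] := cmvt (lt_trans a0 ab) bc.
apply: h_mono; first exact: lt_trans a0 ax.
exact: lt_trans xb bY.
Qed.

Lemma X_le {x y : R} : x <= y -> Xc x <= Xc y.
Proof. by rewrite le_eqVlt => /predU1P[->//|/X_incr/ltW]. Qed.

Lemma gg_decr p q : 0 < p -> p < q -> gg q < gg p.
Proof.
move=> p0 pq; have q0 := lt_trans p0 pq.
have Sq : 0 < 1 - Xc q by rewrite subr_gt0 X_lt1.
have Spq : 1 - Xc q < 1 - Xc p by rewrite ltrD2l ltrN2 X_incr.
rewrite /gg; apply: ltr_pM.
- by apply/ltW/mulr_gt0.
- by rewrite invr_ge0 ltW.
- by rewrite ltr_pM2l.
- by rewrite ltf_pV2.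
Qed.

Lemma gg_pos p : 0 < p -> 0 < gg p.
Proof.
move=> p0; have Sp : 0 < 1 - Xc p by rewrite subr_gt0 X_lt1.
by rewrite /gg divr_gt0 // mulr_gt0.
Qed.

Lemma gg_surj D : 0 < D -> exists p, 0 < p /\ gg p = D.
Proof.
move=> D0.
have S1 : 0 < 1 - Xc 1 by rewrite subr_gt0 X_lt1.
pose a := Num.min 1 (K * (1 - Xc 1) / D).
have a0 : 0 < a by rewrite /a lt_min ltr01 /= divr_gt0 // mulr_gt0.
have a1 : a <= 1 by rewrite /a ge_min lexx.
have aD : a <= K * (1 - Xc 1) / D by rewrite /a ge_min lexx orbT.
pose b := a + K / D.
have ab : a < b by rewrite /b ltrDl divr_gt0.
have b0 := lt_trans a0 ab.
have gb : gg b <= D.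
  have Sb : 1 - Xc b <= 1 by rewrite lerBlDr lerDl X_ge0.
  rewrite /gg ler_pdivrMr // -ler_pdivrMl //.
  apply: (@le_trans _ _ (D^-1 * K)).
    apply: ler_wpM2l; [by rewrite invr_ge0 ltW | exact: ler_piMr (ltW K0) Sb].
  by rewrite mulrC /b lerDr ltW.
have ga : D <= gg a.
  have Sa : 1 - Xc 1 <= 1 - Xc a by rewrite lerD2l lerN2 X_le.
  rewrite /gg ler_pdivlMr //.
  rewrite ler_pdivlMr // mulrC in aD.
  apply: (le_trans aD); apply: ler_wpM2l => //; exact: ltW.
have hv : Num.min (gg a) (gg b) <= D <= Num.max (gg a) (gg b).
  apply/andP; split.
    by rewrite ge_min gb orbT.
  by rewrite le_max ga.
have [c cab hc] := @IVT _ gg a b D (ltW ab) (@gg_cont a b a0) hv.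
exists c; split => //.
by move: cab; rewrite in_itv /= => /andP[ac _]; exact: lt_le_trans a0 ac.
Qed.

End K.
End S.
Section Core.
Context (R : realType) (g G y : R -> R).
Hypothesis gdec : forall p q, 0 < p -> p < q -> g q < g p.
Hypothesis slope : forall a b c, 0 < a -> a < b -> b < c ->
  (G b - G a) / (g b - g a) <= (G c - G b) / (g c - g b).
Hypothesis yinv : forall D, 0 < D -> 0 < y D /\ g (y D) = D.
Hypothesis GE : forall p, 0 < p -> p * g p = G p.

Let FE D : 0 < D -> y D * D = G (y D).
Proof. by move=> D0; have [y0 gy] := yinv _ D0; rewrite -{2}gy GE. Qed.

Let ydec D D' : 0 < D -> D < D' -> y D' < y D.
Proof.
move=> D0 DD'; have D'0 := lt_trans D0 DD'.
have [y0 gy] := yinv _ D0; have [y0' gy'] := yinv _ D'0.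
case: (ltgtP (y D') (y D)) => // h.
  by have := gdec _ _ y0 h; rewrite gy gy' => /(lt_trans DD'); rewrite ltxx.
by move: DD'; rewrite -gy -gy' h ltxx.
Qed.

Let core D1 D2 t : 0 < D1 -> D1 < D2 -> 0 < t -> t < 1 ->
  t * (y D1 * D1) + (1 - t) * (y D2 * D2) <= y (t * D1 + (1 - t) * D2) * (t * D1 + (1 - t) * D2).
Proof.
move=> D10 D12 t0 t1.
set Dt := t * D1 + (1 - t) * D2.
have D20 := lt_trans D10 D12.
have D1t : D1 < Dt by rewrite /Dt; nra.
have Dt2 : Dt < D2 by rewrite /Dt; nra.
have Dt0 := lt_trans D10 D1t.
rewrite FE // FE // FE //.
have p2 := (yinv _ D20).1.
have h := slope _ _ _ p2 (ydec _ _ Dt0 Dt2) (ydec _ _ D10 D1t).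
rewrite (yinv _ D20).2 (yinv _ Dt0).2 (yinv _ D10).2 in h.
set F1 := G (y D1) in h *; set F2 := G (y D2) in h *; set Ft := G (y Dt) in h *.
have e1 : Dt - D2 = - (t * (D2 - D1)) by rewrite /Dt; ring.
have e2 : D1 - Dt = - ((1 - t) * (D2 - D1)) by rewrite /Dt; ring.
rewrite e1 e2 !invrN !mulrN lerN2 in h.
have A0 : 0 < t * (D2 - D1) by rewrite mulr_gt0 // subr_gt0.
have B0 : 0 < (1 - t) * (D2 - D1) by rewrite mulr_gt0 // subr_gt0.
rewrite ler_pdivrMr // mulrAC ler_pdivlMr // in h.
have d0 : 0 < D2 - D1 by rewrite subr_gt0.
nra.
Qed.

Lemma concave_core : concave_on_pos (fun D => y D * D).
Proof.
move=> D1 D2 t D10 D20.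
rewrite le_eqVlt => /predU1P[<- _|t0].
  by rewrite !mul0r subr0 !mul1r !add0r.
rewrite le_eqVlt => /predU1P[->|t1].
  by rewrite subrr !mul0r !mul1r !addr0.
case: (ltgtP D1 D2) => [D12|D21|<-].
- exact: core _ _ t D10 D12 t0 t1.
- have := core _ _ (1 - t) D20 D21.
  rewrite subr_gt0 ltrBlDr ltrDl => /(_ t1 t0).
  have -> : (1 - (1 - t)) = t by ring.
  have -> : (1 - t) * D2 + t * D1 = t * D1 + (1 - t) * D2 by ring.
  lra.
- have -> : t * D1 + (1 - t) * D1 = D1 by ring.
  lra.
Qed.
End Core.

Theorem lemma7 (R : realType) (M B sigma mu : R) :
  0 < M -> 0 < B -> 0 < sigma -> 0 < mu ->
  let g := attention_demand M B mu sigma in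
  (* g is a strictly decreasing bijection (0,oo) -> (0,oo) *)
  ((forall p q : R, 0 < p -> p < q -> g q < g p) /\
   (forall p : R, 0 < p -> 0 < g p) /\
   (forall D : R, 0 < D -> exists p : R, 0 < p /\ g p = D)) /\
  (* for its inverse y, F(D) = y(D) D is concave on D > 0 *)
  (forall y : R -> R,
     (forall D : R, 0 < D -> 0 < y D /\ g (y D) = D) ->
     concave_on_pos (fun D => y D * D)).
Proof.
move=> M0 B0 s0 mu0 g.
have K0 : 0 < M * B by rewrite mulr_gt0.
have gdec : forall p q : R, 0 < p -> p < q -> g q < g p.
  by move=> p q; exact: (@gg_decr R mu sigma s0 _ K0 p q).
split; first split => //; first split.
- by move=> p; exact: (@gg_pos R mu sigma s0 _ K0).
- by move=> D; exact: (@gg_surj R mu sigma s0 _ K0).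
move=> y hy.
apply: (@concave_core R g (fun p => M * B * (1 - normal_cdf mu sigma p)) y gdec _ hy).
- by move=> a b c; exact: (@slope_mono R mu sigma s0 _ K0).
- move=> p p0; rewrite /g /attention_demand; field; exact: lt0r_neq0.
Qed.
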